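(* Let $\Sigma=\{0,1\}$. For any $D\in\mathbb N_+$ there exists $\mathcal F\subseteq\Sigma^{\Sigma^*}$ such that $\mathrm{Ldim}(\mathcal F)=D$ and $\mathrm{VCdim}(\mathcal F)=1$ over the domain $\Sigma^*$, and $\mathrm{VCdim}(\mathcal F^{\mathrm{e2e}(T)})=D$ for every $T>D$, even over the domain $\Sigma^n$ with $n=\lceil\log_2 D\rceil+1$.
   Context: For $f:\Sigma^*\to\Sigma$, $\bar f(\mathbf x)$ is $\mathbf x$ with $f(\mathbf x)$ appended; $f^{\mathrm{CoT}(T)}=\bar f^{\circ T}$; $f^{\mathrm{e2e}(T)}(\mathbf x)$ is the last token of $f^{\mathrm{CoT}(T)}(\mathbf x)$; $\mathcal F^{\mathrm{e2e}(T)}=\{f^{\mathrm{e2e}(T)}:f\in\mathcal F\}$. $\mathrm{VCdim}$ is the VC dimension. Littlestone dimension $\mathrm{Ldim}(\mathcal F)$: the largest depth $d$ of a complete binary tree with nodes labeled by elements of $\Sigma^*$ such that for every root-to-leaf path $\epsilon\in\{0,1\}^d$ some $f\in\mathcal F$ satisfies $f(\text{$i$-th node on the path})=\epsilon_i$ for all $i\in[d]$ (with $\epsilon_i=1$ meaning the path turns right). *)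

(* Defs.v *)
From mathcomp Require Import all_boot.
Set Implicit Arguments. Unset Strict Implicit. Unset Printing Implicit Defensive.

Definition word := seq bool.

Definition hclass := (word -> bool) -> Prop.

Definition fbar (f : word -> bool) (x : word) : word := rcons x (f x).

Definition cot (f : word -> bool) (T : nat) (x : word) : word := iter T (fbar f) x.

(* f^{e2e(T)}(x) = last token of f^{CoT(T)}(x)
   (the default [false] is only used when T = 0 and x is empty). *)
Definition e2e (f : word -> bool) (T : nat) (x : word) : bool :=
  last false (cot f T x).

Definition e2e_class (F : hclass) (T : nat) : hclass :=
  fun g => exists f, F f /\ g = e2e f T.

Definition shatters (X : word -> Prop) (F : hclass) (S : seq word) : Prop :=
  uniq S /\ (forall x, x \in S -> X x) /\
  forall lab : word -> bool, exists f, F f /\ forall x, x \in S -> f x = lab x.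

Definition VCdim_eq (X : word -> Prop) (F : hclass) (d : nat) : Prop :=
  (exists S, shatters X F S /\ size S = d) /\
  (forall S, shatters X F S -> size S <= d).

(* A complete binary tree of depth d with nodes labeled by words is encoded as
   a map t from paths (the sequence of turns from the root, of length < d) to
   node labels.  It is shattered by F if for every root-to-leaf path
   eps in {0,1}^d some f in F satisfies f(i-th node on the path) = eps_i
   (eps_i = true meaning the path turns right). *)
Definition tree_shattered (F : hclass) (d : nat) (t : seq bool -> word) : Prop :=
  forall eps : seq bool, size eps = d ->
    exists f, F f /\ forall i, i < d -> f (t (take i eps)) = nth false eps i.

Definition Ldim_eq (F : hclass) (d : nat) : Prop :=
  (exists t, tree_shattered F d t) /\
  (forall d' t, tree_shattered F d' t -> d' <= d).

(* Main.v *)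
Require Import Defs.
From mathcomp Require Import all_boot.
From mathcomp Require Import zify.
From Stdlib Require Import ClassicalEpsilon.

Fixpoint bv (s : seq bool) : nat :=
  if s is b :: s' then b * 2 ^ size s' + bv s' else 0.
Fixpoint enc (n j : nat) : seq bool :=
  if n is n'.+1 then odd j :: enc n' j./2 else [::].
Fixpoint dec (x : seq bool) : nat :=
  if x is b :: x' then b + (dec x').*2 else 0.

Lemma bv_cat s1 s2 : bv (s1 ++ s2) = bv s1 * 2 ^ size s2 + bv s2.
Proof.
elim: s1 => [|b s1 IH] //=. rewrite IH size_cat expnD. case: b => /=; lia.
Qed.

Lemma bv_lt s : bv s < 2 ^ size s.
Proof.
elim: s => [|b s IH] //=. rewrite expnS. case: b => /=; lia.
Qed.

Lemma bv_nseq m : bv (nseq m false) = 0.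
Proof. by elim: m. Qed.

Lemma size_enc n j : size (enc n j) = n.
Proof. by elim: n j => [|n IH] j //=; rewrite IH. Qed.

Lemma dec_enc n j : j < 2 ^ n -> dec (enc n j) = j.
Proof.
elim: n j => [|n IH] j /=; first by case: j.
move=> hj. rewrite IH; first exact: odd_double_half.
have := odd_double_half j. rewrite expnS in hj. lia.
Qed.

Lemma key D eps k : size eps = D -> k < D ->
  (bv (take k eps ++ true :: nseq (D - k.+1) false) <= bv eps) = nth false eps k.
Proof.
move=> hs hk.
rewrite -{2}(cat_take_drop k eps) (drop_nth false); last by rewrite hs.
rewrite !bv_cat /= size_nseq size_drop hs bv_nseq.
have := bv_lt (drop k.+1 eps). rewrite size_drop hs.
case: (nth false eps k) => /=; lia.
Qed.

Definition code (D n : nat) (w : word) : nat :=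
  let b := drop n w in
  if size b < D then bv (b ++ true :: nseq (D - (size b).+1) false)
  else if nth false b (dec (take n w)) then 0 else 2 ^ D.

Definition fF D n (eps : seq bool) (w : word) : bool := code D n w <= bv eps.
Definition FF D n : hclass := fun f => exists eps, size eps = D /\ f = fF D n eps.

Lemma fF_pref D n eps k w : size eps = D -> k < D -> drop n w = take k eps ->
  fF D n eps w = nth false eps k.
Proof.
move=> hs hk hw. rewrite /fF /code hw size_take hs hk hk. exact: key.
Qed.

Lemma fF_final D n eps x s : size eps = D -> size x = n -> dec x < D ->
  fF D n eps (x ++ eps ++ s) = nth false eps (dec x).
Proof.
move=> hs hx hd. rewrite /fF /code drop_size_cat // take_size_cat //.
rewrite size_cat hs ltnNge leq_addr /= nth_cat hs hd.
case: (nth false eps (dec x)) => //.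
have := bv_lt eps. rewrite hs. lia.
Qed.

Lemma cot_pref D n eps x k : size eps = D -> size x = n -> k <= D ->
  cot (fF D n eps) k x = x ++ take k eps.
Proof.
move=> hs hx. elim: k => [|k IH] hk; first by rewrite take0 cats0.
rewrite /cot iterS -/(cot _ k x) IH; last by lia.
rewrite /fbar (@fF_pref _ _ _ k) //; last by rewrite drop_size_cat.
rewrite rcons_cat -take_nth // hs. lia.
Qed.

Lemma cot_tail D n eps x k : size eps = D -> size x = n ->
  exists s, cot (fF D n eps) (D + k) x = x ++ eps ++ s.
Proof.
move=> hs hx. elim: k => [|k [s IH]].
  exists [::]. by rewrite addn0 (@cot_pref D n eps x D hs hx) // -hs take_size cats0.
exists (rcons s (fF D n eps (x ++ eps ++ s))).
by rewrite addnS /cot iterS -/(cot _ _ x) IH /fbar -!rcons_cat.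
Qed.

Lemma e2e_val D n eps x T : D < T -> size eps = D -> size x = n -> dec x < D ->
  e2e (fF D n eps) T x = nth false eps (dec x).
Proof.
move=> hT hs hx hd. have -> : T = (D + (T - D).-1).+1 by lia.
have [s hc] := @cot_tail D n eps x (T - D).-1 hs hx.
by rewrite /e2e /cot iterS -/(cot _ _ x) hc /fbar last_rcons fF_final.
Qed.

Lemma count_bound d D (P : seq bool -> seq bool -> Prop) :
  (forall eps, size eps = d -> exists e, size e = D /\ P eps e) ->
  (forall eps1 eps2 e, size eps1 = d -> size eps2 = d -> P eps1 e -> P eps2 e -> eps1 = eps2) ->
  d <= D.
Proof.
move=> Hex Hu.
have g : forall t : d.-tuple bool, {e : D.-tuple bool | P t e}.
  move=> t; apply: constructive_indefinite_description.
  have [e [He HP]] := Hex t (size_tuple t).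
  have He' : size e == D by apply/eqP.
  by exists (Tuple He').
pose h := fun t => sval (g t).
have inj_h : injective h.
  move=> t1 t2 E; apply: val_inj.
  apply: (Hu _ _ (h t1)); rewrite ?size_tuple //; first exact: (svalP (g t1)).
  rewrite E; exact: (svalP (g t2)).
have := leq_card h inj_h. by rewrite !card_tuple card_bool leq_exp2l.
Qed.

Theorem theoremE3 (D : nat) (hD : 0 < D) :
  exists F : hclass,
    Ldim_eq F D /\
    VCdim_eq (fun _ => True) F 1 /\
    forall T : nat, D < T ->
      VCdim_eq (fun _ => True) (e2e_class F T) D /\
      VCdim_eq (fun x => size x = (up_log 2 D).+1) (e2e_class F T) D.
Proof.
set n := (up_log 2 D).+1.
have hDn : D < 2 ^ n.
  have := up_logP D (isT : 1 < 2). rewrite /n expnS. have := expn_gt0 2 (up_log 2 D). lia.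
exists (FF D n).
split; [split|split; [split|]].
- exists (fun p => nseq n false ++ p) => eps hs.
  exists (fF D n eps); split; first by exists eps.
  move=> i hi; apply: fF_pref => //. by rewrite drop_size_cat // size_nseq.
- move=> d t Hsh.
  apply: (@count_bound _ _ (fun eps e => forall i, i < d -> fF D n e (t (take i eps)) = nth false eps i)).
    move=> eps hs. have [f [[e [he ->]] Hf]] := Hsh eps hs. by exists e.
  move=> eps1 eps2 e h1 h2 P1 P2.
  have E : forall i, i <= d -> take i eps1 = take i eps2.
    elim=> [|i IH] hi; first by rewrite !take0.
    rewrite (take_nth false) ?h1 // (take_nth false (s:=eps2)) ?h2 // IH; last by lia.
    by rewrite -P1 // -P2 // IH //; lia.
  by rewrite -(take_size eps1) -(take_size eps2) h1 h2 E.
- exists [:: nseq n false]; split => //; split => //; split => // lab.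
  exists (fF D n (nseq D (lab (nseq n false)))); split; first by exists (nseq D (lab (nseq n false))); rewrite size_nseq.
  move=> x; rewrite inE => /eqP ->.
  rewrite (@fF_pref _ _ _ 0) ?size_nseq //; first by rewrite nth_nseq hD.
  by rewrite take0 drop_oversize // size_nseq.
- move=> S [hu [_ hsh]].
  rewrite leqNgt; apply/negP => hS.
  set x := nth [::] S 0. set y := nth [::] S 1.
  have xy : x != y.
    rewrite /x /y nth_uniq //; exact: ltnW.
  have xS : x \in S by apply: mem_nth; exact: ltnW.
  have yS : y \in S by apply: mem_nth.
  have [f1 [[e1 [_ ->]] H1]] := hsh (fun w => w == x).
  have [f2 [[e2 [_ ->]] H2]] := hsh (fun w => w == y).
  have a1 := H1 x xS. have b1 := H1 y yS. have a2 := H2 x xS. have b2 := H2 y yS.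
  rewrite eqxx in a1 b2. rewrite (negbTE xy) in a2. rewrite eq_sym (negbTE xy) in b1.
  move: a1 b1 a2 b2; rewrite /fF; move: (code D n x) (code D n y) (bv e1) (bv e2) => p q r s; rewrite eqxx; clear; lia.
- move=> T hT.
  have low : forall X : word -> Prop, (forall x, size x = n -> X x) ->
     exists S, shatters X (e2e_class (FF D n) T) S /\ size S = D.
    move=> X hX. exists (mkseq (enc n) D); split; last by rewrite size_mkseq.
    split; first rewrite map_inj_in_uniq ?iota_uniq //.
      move=> a b; rewrite !mem_iota => ha hb hab.
      by rewrite -(@dec_enc n a) ?hab ?dec_enc //; lia.
    split; first by move=> x /mapP [j _ ->]; apply: hX; rewrite size_enc.
    move=> lab. set eps := mkseq (fun j => lab (enc n j)) D.
    exists (e2e (fF D n eps) T); split; first by exists (fF D n eps); split => //; exists eps; rewrite size_mkseq.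
    move=> x /mapP [j]; rewrite mem_iota => hj ->.
    rewrite e2e_val ?size_mkseq ?size_enc ?dec_enc //; try lia.
    by rewrite nth_mkseq //; lia.
  have up : forall X : word -> Prop, forall S, shatters X (e2e_class (FF D n) T) S -> size S <= D.
    move=> X S [hu [_ hsh]].
    apply: (@count_bound _ _ (fun eps e => forall k, k < size S -> e2e (fF D n e) T (nth [::] S k) = nth false eps k)).
      move=> eps hs.
      have [f [[f0 [[e [he ->]] ->]] Hf]] := hsh (fun w => nth false eps (index w S)).
      exists e; split => // k hk. by rewrite Hf ?mem_nth // index_uniq.
    move=> eps1 eps2 e h1 h2 P1 P2.
    apply: (@eq_from_nth _ false); first by rewrite h1 h2.
    move=> k; rewrite h1 => hk. by rewrite -P1 // -P2.
  split; split; [apply: low => //| exact: up | apply: low => // | exact: up].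
Qed.
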